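(* Every $A \in \overline{\square}_\vee$ is a retract in $\mathbf{SLat}$ of $[1]^n$ for some $n \in \mathbb{N}$.
   Context: $\mathbf{SLat}$ is the category of (join-)semilattices—sets with an associative, commutative, idempotent binary operation $\vee$—and homomorphisms preserving $\vee$ (not necessarily preserving bounds or meets). Each semilattice is a poset via $x\le y\iff x\vee y=y$. $\overline{\square}_\vee$ is the full subcategory of $\mathbf{SLat}$ on the finite inhabited semilattices whose induced poset is a distributive lattice. $[1]=\{0<1\}$ with $\vee=\max$, and $[1]^n$ has the pointwise structure. *)

(* Defs.v *)
From mathcomp Require Import all_boot.
Set Implicit Arguments. Unset Strict Implicit. Unset Printing Implicit Defensive.

Definition is_semilattice (T : Type) (j : T -> T -> T) : Prop :=
  (forall x y z, j x (j y z) = j (j x y) z) /\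
  (forall x y, j x y = j y x) /\
  (forall x, j x x = x).

Definition sl_le (T : Type) (j : T -> T -> T) (x y : T) : Prop := j x y = y.

Definition is_meet (T : Type) (j : T -> T -> T) (x y m : T) : Prop :=
  sl_le j m x /\ sl_le j m y /\
  (forall z, sl_le j z x -> sl_le j z y -> sl_le j z m).

Definition sl_distributive_lattice (T : Type) (j : T -> T -> T) : Prop :=
  (forall x y, exists m, is_meet j x y m) /\
  (forall x y z m1 m2 m3,
      is_meet j x (j y z) m1 -> is_meet j x y m2 -> is_meet j x z m3 ->
      m1 = j m2 m3).

Definition sl_hom (T U : Type) (jT : T -> T -> T) (jU : U -> U -> U)
  (f : T -> U) : Prop := forall x y, f (jT x y) = jU (f x) (f y).

(* [1]^n : functions 'I_n -> bool with the pointwise max (= orb). *)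
Definition cube (n : nat) := {ffun 'I_n -> bool}.
Definition cube_join (n : nat) (u v : cube n) : cube n :=
  [ffun i => u i || v i].

(* Main.v *)
Require Import Defs.
From mathcomp Require Import all_boot.
Set Implicit Arguments. Unset Strict Implicit.

Definition Jl (T : Type) (j : T -> T -> T) (bot : T) (P : pred T) (s : seq T) :=
  foldr (fun t acc => if P t then j t acc else acc) bot s.

Lemma Jl_or (T : Type) (j : T -> T -> T) (bot : T) (P Q : pred T) s :
  is_semilattice j ->
  Jl j bot (fun t => P t || Q t) s = j (Jl j bot P s) (Jl j bot Q s).
Proof.
move=> [jA [jC jI]]; elim: s => [|t s IH] /=; first by rewrite jI.
rewrite IH; set a := Jl j bot P s; set b := Jl j bot Q s.
case: (P t); case: (Q t) => //=.
- by rewrite -[RHS]jA [j a (j t b)]jA [j a t]jC -[j (j t a) b]jA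
     [j t (j t _)]jA jI.
- by rewrite [RHS]jA [j a t]jC -jA.
Qed.

Lemma Jl_ext (T : Type) (j : T -> T -> T) (bot : T) (P Q : pred T) s :
  P =1 Q -> Jl j bot P s = Jl j bot Q s.
Proof. by move=> h; elim: s => //= t s ->; rewrite h. Qed.

Lemma Jl_ub (T : eqType) (j : T -> T -> T) (bot : T) (P : pred T) s t :
  is_semilattice j -> t \in s -> P t -> j t (Jl j bot P s) = Jl j bot P s.
Proof.
move=> [jA [jC jI]]; elim: s => [|u s IH] //=; rewrite inE => /orP[/eqP<-|ts] Pt.
  by rewrite Pt jA jI.
have h := IH ts Pt; case: (P u) => //.
by rewrite jA [j t u]jC -jA h.
Qed.

Lemma Jl_lub (T : Type) (j : T -> T -> T) (bot : T) (P : pred T) s z :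
  is_semilattice j -> j bot z = z -> (forall t, P t -> j t z = z) ->
  j (Jl j bot P s) z = z.
Proof.
move=> [jA [jC jI]] hb hP; elim: s => [|u s IH] //=.
case Pu: (P u) => //; by rewrite -jA IH hP.
Qed.

Lemma exists_bot (T : finType) (j : T -> T -> T) (a0 : T) :
  is_semilattice j -> sl_distributive_lattice j ->
  exists bot, forall x, j bot x = x.
Proof.
move=> [jA [jC jI]] [hm _].
suff [b hb] : exists b, forall x, x \in enum T -> j b x = x.
  by exists b => x; apply: hb; rewrite mem_enum.
elim: (enum T) => [|u s [b hb]]; first by exists a0.
have [m [m1 [m2 _]]] := hm u b.
exists m => x; rewrite inE => /orP[/eqP->|xs]; first by [].
rewrite /sl_le in m2; by rewrite -(hb x xs) jA m2.
Qed.

Definition leb (T : eqType) (j : T -> T -> T) x y := j x y == y.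
Definition jpb (T : finType) (j : T -> T -> T) (t : T) :=
  [forall x, forall y, leb j t (j x y) ==> (leb j t x || leb j t y)].

Lemma key (T : finType) (j : T -> T -> T) (bot : T) :
  is_semilattice j -> sl_distributive_lattice j -> (forall x, j bot x = x) ->
  forall x, Jl j bot (fun t => leb j t x && jpb j t) (enum T) = x.
Proof.
move=> hs; have hs' := hs; move: hs' => [jA [jC jI]] [hm hd] hb.
have trans : forall x y z, j x y = y -> j y z = z -> j x z = z.
  by move=> x y z h1 h2; rewrite -h2 jA h1.
have le_P : forall x, j (Jl j bot (fun t => leb j t x && jpb j t) (enum T)) x = x.
  move=> x; apply: Jl_lub => // t /andP[/eqP ? _] //.
have mono : forall x y, j x y = y ->
  j (Jl j bot (fun t => leb j t x && jpb j t) (enum T))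
    (Jl j bot (fun t => leb j t y && jpb j t) (enum T)) =
    (Jl j bot (fun t => leb j t y && jpb j t) (enum T)).
  move=> x y hxy; apply: Jl_lub => // t /andP[/eqP htx jt].
  apply: Jl_ub => //; first by rewrite mem_enum.
  by rewrite jt andbT; apply/eqP; apply: trans htx hxy.
have main : forall k x, #|[pred y | leb j y x]| <= k ->
  j x (Jl j bot (fun t => leb j t x && jpb j t) (enum T)) =
  Jl j bot (fun t => leb j t x && jpb j t) (enum T).
  elim=> [|k IH] x hk.
    have : x \in [pred y | leb j y x] by rewrite inE /leb jI eqxx.
    move=> xin; have : 0 < #|[pred y | leb j y x]| by apply/card_gt0P; exists x.
    by rewrite lt0n leqn0 in hk * => /negP; rewrite hk.
case jx: (jpb j x).
  apply: Jl_ub => //; first by rewrite mem_enum.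
  by rewrite jx /leb jI eqxx.
move/negbT: jx; rewrite negb_forall => /existsP[a]; rewrite negb_forall => /existsP[b].
rewrite negb_imply negb_or => /andP[/eqP hxab /andP[nxa nxb]].
have [ma [ma1 [ma2 ma3]]] := hm x a.
have [mb [mb1 [mb2 mb3]]] := hm x b.
have mx : is_meet j x (j a b) x.
  by split; first exact: jI; split => // z hz _.
have ex := hd _ _ _ _ _ _ mx (conj ma1 (conj ma2 ma3)) (conj mb1 (conj mb2 mb3)).
have sub : forall m, sl_le j m x -> ~~ leb j x m ->
    #|[pred y | leb j y m]| <= k.
  move=> m hm1 hm2; rewrite -ltnS; apply: leq_trans hk.
  apply: proper_card; apply/properP; split.
    apply/subsetP => y; rewrite !inE /leb => /eqP hy; apply/eqP.
    exact: trans hy hm1.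
  exists x; first by rewrite inE /leb jI eqxx.
  by rewrite inE.
have hma : j ma (Jl j bot (fun t => leb j t ma && jpb j t) (enum T)) =
           Jl j bot (fun t => leb j t ma && jpb j t) (enum T).
  apply: IH; apply: sub => //; apply: contra nxa => /eqP h.
  by apply/eqP; apply: trans h ma2.
have hmb : j mb (Jl j bot (fun t => leb j t mb && jpb j t) (enum T)) =
           Jl j bot (fun t => leb j t mb && jpb j t) (enum T).
  apply: IH; apply: sub => //; apply: contra nxb => /eqP h.
  by apply/eqP; apply: trans h mb2.
rewrite {1}ex -jA.
rewrite (trans _ _ _ hmb (mono _ _ mb1)).
exact: trans hma (mono _ _ ma1).
move=> x; have ge := main _ x (leqnn _).
by rewrite -ge jC le_P.
Qed.

Theorem mainTheorem7 (T : finType) (j : T -> T -> T) (a0 : T) :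
  is_semilattice j -> sl_distributive_lattice j ->
  exists (n : nat) (s : T -> cube n) (r : cube n -> T),
    sl_hom j (@cube_join n) s /\ sl_hom (@cube_join n) j r /\
    (forall x, r (s x) = x).
Proof.
move=> hs hd; have [bot hb] := exists_bot a0 hs hd.
have hs' := hs; move: hs' => [jA [jC jI]].
exists #|T|.
exists (fun x => [ffun i => leb j (enum_val i) x && jpb j (enum_val i)] : cube #|T|).
exists (fun u : cube #|T| => Jl j bot (fun t => u (enum_rank t)) (enum T)).
split; last split.
- move=> x y; apply/ffunP => i; rewrite !ffunE.
  case jp: (jpb j (enum_val i)); rewrite ?andbF ?andbT //.
  apply/idP/idP.
    by move/forallP: jp => /(_ x) /forallP /(_ y) /implyP.
  case/orP => /eqP h; apply/eqP.
    by rewrite jA h.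
  by rewrite jA [j _ x]jC -jA h.
- move=> u v; rewrite -Jl_or //; apply: Jl_ext => t.
  by rewrite /cube_join ffunE.
- move=> x; rewrite -{2}(key hs hd hb x); apply: Jl_ext => t.
  by rewrite ffunE enum_rankK.
Qed.
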